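(* Let $G$ be a simple undirected graph on $\{1,\dots,n\}$ with adjacency $g_{ij}$ and degrees $d_i$, and let the exposure of unit $i$ be $e_i=\sum_j g_{ij}z_j\in\{0,1,\dots,d_i\}$. Suppose the potential outcomes are $Y_i(z_i,e_i)=\alpha_i+\beta_iz_i+B_i(e_i)$ with $B_i(0)=0$. Under a completely randomized design with $1\le n_t\le n-1$ treated units, and under a restricted Bernoulli design with $0<p<1$, the bias of $$\hat\beta_{naive}=\frac{\sum_i Y_i^{obs}Z_i}{\sum_i Z_i}-\frac{\sum_i Y_i^{obs}(1-Z_i)}{\sum_i(1-Z_i)}$$ for $\mathrm{DTE}=\frac1n\sum_i(Y_i(1,0)-Y_i(0,0))$ is $$\mathbb E[\hat\beta_{naive}]-\mathrm{DTE}=\sum_i\sum_{e\ne0}B_i(e)\big[\alpha_i(1,e)-\alpha_i(0,e)\big],$$ where $\alpha_i(z,e)=\mathbb E\!\left[\frac{I(Z_i=z,E_i=e)}{\sum_jI(Z_j=z)}\right]$.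
   Context: Completely randomized design: $\mathbf Z$ is uniform over vectors in $\{0,1\}^n$ with exactly $n_t$ ones. Restricted Bernoulli design with parameter $p$: $P(\mathbf Z=\mathbf z)=p^{|\mathbf z|}(1-p)^{n-|\mathbf z|}/(1-p^n-(1-p)^n)$ for $0<|\mathbf z|<n$ and $0$ otherwise, where $|\mathbf z|=\sum_i z_i$. $E_i=\sum_j g_{ij}Z_j$ and $Y_i^{obs}=Y_i(Z_i,E_i)$. *)

(* Defs.v *)
From HB Require Import structures.
From mathcomp Require Import all_boot all_order all_algebra.
Set Implicit Arguments. Unset Strict Implicit. Unset Printing Implicit Defensive.
Import Order.TTheory GRing.Theory Num.Theory.
Local Open Scope ring_scope.

(* A treatment assignment vector z in {0,1}^n (true = treated). *)
Notation assign n := {ffun 'I_n -> bool}.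

Definition ntreated n (z : assign n) : nat := \sum_(i < n) (z i : nat).

Definition simple_graph n (g : rel 'I_n) : Prop :=
  (forall i j, g i j = g j i) /\ (forall i, g i i = false).

Definition degree n (g : rel 'I_n) (i : 'I_n) : nat := #|[set j | g i j]|.

Definition exposure n (g : rel 'I_n) (z : assign n) (i : 'I_n) : nat :=
  \sum_(j < n) ((g i j && z j) : nat).

(* A design is a probability mass function on assignment vectors. *)
Definition design (R : realFieldType) n := assign n -> R.

Definition crd (R : realFieldType) n (nt : nat) : design R n :=
  fun z => if ntreated z == nt then ('C(n, nt)%:R)^-1 else 0.

Definition rbd (R : realFieldType) n (p : R) : design R n :=
  fun z => if (0 < ntreated z)%N && (ntreated z < n)%N then
             p ^+ ntreated z * (1 - p) ^+ (n - ntreated z)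
               / (1 - p ^+ n - (1 - p) ^+ n)
           else 0.

Definition Exp (R : realFieldType) n (P : design R n) (f : assign n -> R) : R :=
  \sum_(z : assign n) P z * f z.

Definition Ypot (R : realFieldType) n (alpha beta : 'I_n -> R) (B : 'I_n -> nat -> R)
  (i : 'I_n) (zi : bool) (e : nat) : R :=
  alpha i + beta i * (zi : nat)%:R + B i e.

Definition Yobs (R : realFieldType) n (g : rel 'I_n) (alpha beta : 'I_n -> R)
  (B : 'I_n -> nat -> R) (z : assign n) (i : 'I_n) : R :=
  Ypot alpha beta B i (z i) (exposure g z i).

Definition beta_naive (R : realFieldType) n (g : rel 'I_n) (alpha beta : 'I_n -> R)
  (B : 'I_n -> nat -> R) (z : assign n) : R :=
  (\sum_(i < n) Yobs g alpha beta B z i * (z i : nat)%:R) / (\sum_(i < n) (z i : nat)%:R)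
  - (\sum_(i < n) Yobs g alpha beta B z i * (1 - (z i : nat)%:R))
      / (\sum_(i < n) (1 - (z i : nat)%:R)).

Definition DTE (R : realFieldType) n (alpha beta : 'I_n -> R) (B : 'I_n -> nat -> R) : R :=
  n%:R^-1 * \sum_(i < n) (Ypot alpha beta B i true 0 - Ypot alpha beta B i false 0).

Definition alpha_ze (R : realFieldType) n (P : design R n) (g : rel 'I_n)
  (i : 'I_n) (zv : bool) (e : nat) : R :=
  Exp P (fun z => ((z i == zv) && (exposure g z i == e))%:R
                  / (\sum_(j < n) (z j == zv)%:R)).

Definition bias_formula (R : realFieldType) n (P : design R n) (g : rel 'I_n)
  (alpha beta : 'I_n -> R) (B : 'I_n -> nat -> R) : Prop :=
  Exp P (beta_naive g alpha beta B) - DTE alpha beta B =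
  \sum_(i < n) \sum_(1 <= e < (degree g i).+1)
     B i e * (alpha_ze P g i true e - alpha_ze P g i false e).

(* Main.v *)
From HB Require Import structures.
Require Import Defs.
From mathcomp Require Import all_boot all_order all_algebra.
From mathcomp Require Import fingroup perm ring lra.
Set Implicit Arguments. Unset Strict Implicit. Unset Printing Implicit Defensive.
Import Order.TTheory GRing.Theory Num.Theory.
Local Open Scope ring_scope.

Section S.
Variables (R : realFieldType) (n : nat).
Implicit Types (P : design R n) (z : assign n).

Lemma ExpD P F G : Exp P (fun z => F z + G z) = Exp P F + Exp P G.
Proof. by rewrite /Exp -big_split; apply: eq_bigr => z _; rewrite mulrDr. Qed.
Lemma ExpB P F G : Exp P (fun z => F z - G z) = Exp P F - Exp P G.
Proof. by rewrite /Exp -sumrB; apply: eq_bigr => z _; rewrite mulrBr. Qed.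
Lemma ExpZ P c F : Exp P (fun z => c * F z) = c * Exp P F.
Proof. rewrite /Exp mulr_sumr; apply: eq_bigr => z _; by rewrite mulrCA. Qed.
Lemma Exp_sum P (I : Type) (r : seq I) (Q : pred I) (F : I -> assign n -> R) :
  Exp P (fun z => \sum_(i <- r | Q i) F i z) = \sum_(i <- r | Q i) Exp P (F i).
Proof. rewrite /Exp; under eq_bigr do rewrite mulr_sumr. by rewrite exchange_big. Qed.
Lemma Exp_ext P F G : (forall z, P z != 0 -> F z = G z) -> Exp P F = Exp P G.
Proof.
move=> H; rewrite /Exp; apply: eq_bigr => z _.
by case: (eqVneq (P z) 0) => [->|/H ->]; rewrite ?mul0r.
Qed.

Lemma sum_pick (G : nat -> R) d k : (k <= d)%N ->
  \sum_(e < d.+1) G e * (k == e)%:R = G k.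
Proof.
move=> kd; have kd1 : (k < d.+1)%N by [].
rewrite (bigD1 (Ordinal kd1)) //= eqxx mulr1 big1 ?addr0 // => j hj.
case: eqP => [ej|]; last by rewrite mulr0.
by move: hj; rewrite -val_eqE /= ej eqxx.
Qed.

Lemma sum_e (Bf : nat -> R) d k : Bf 0%N = 0 -> (k <= d)%N ->
  \sum_(1 <= e < d.+1) Bf e * (k == e)%:R = Bf k.
Proof.
move=> B0 kd; rewrite -(sum_pick Bf kd) -(big_mkord xpredT (fun e => Bf e * (k == e)%:R)).
by rewrite big_ltn // B0 mul0r add0r.
Qed.

Lemma ntreated_le z : (ntreated z <= n)%N.
Proof.
have H : (ntreated z <= \sum_(i < n) 1)%N by apply: leq_sum => i _; exact: leq_b1.
by rewrite sum_nat_const card_ord muln1 in H.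
Qed.

Lemma exposure_le g z i : (exposure g z i <= degree g i)%N.
Proof.
rewrite /exposure /degree -sum1dep_card.
rewrite [X in (_ <= X)%N]big_mkcond; apply: leq_sum => j _; by case: (g i j); case: (z j).
Qed.

Lemma sym_sum (f : nat -> R) (h : bool -> nat -> R) i j :
  \sum_(z : assign n) f (ntreated z) * h (z i) (ntreated z)
  = \sum_(z : assign n) f (ntreated z) * h (z j) (ntreated z).
Proof.
pose s := tperm i j.
pose m (z : assign n) : assign n := [ffun k => z (s k)].
have mK : involutive m by move=> z; apply/ffunP => k; rewrite !ffunE tpermK.
have nm z : ntreated (m z) = ntreated z.
  rewrite /ntreated; under eq_bigr do rewrite ffunE.
  by rewrite [in RHS](reindex_inj (@perm_inj _ s)).
rewrite (reindex_inj (inv_inj mK)).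
under eq_bigr => z _ do rewrite nm ffunE tpermL.
done.
Qed.

Lemma sum_ntreated (F : nat -> R) :
  \sum_(z : assign n) F (ntreated z) = \sum_(k < n.+1) F k *+ 'C(n, k).
Proof.
pose h (A : {set 'I_n}) : assign n := [ffun i => i \in A].
have hb : bijective h.
  exists (fun z : assign n => [set i | z i]) => [A|z].
    by apply/setP => i; rewrite inE ffunE.
  by apply/ffunP => i; rewrite ffunE inE.
rewrite (reindex h); last by apply: onW_bij.
have nh A : ntreated (h A) = #|A|.
  rewrite /ntreated -sum1_card [RHS]big_mkcond /=; apply: eq_bigr => i _.
  by rewrite ffunE; case: (i \in A).
under eq_bigr do rewrite nh.
have e1 (A : {set 'I_n}) : F #|A| = \sum_(k < n.+1) F k * (#|A| == k)%:R.
  by rewrite sum_pick //; have := max_card A; rewrite card_ord.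
under eq_bigr do rewrite e1.
rewrite exchange_big /=; apply: eq_bigr => k _.
rewrite -mulr_sumr -natr_sum.
have -> : (\sum_(A : {set 'I_n}) ((#|A| == k) : nat))%N = 'C(n,k).
  by have := card_draws 'I_n k; rewrite card_ord -sum1dep_card big_mkcond.
by rewrite mulr_natr.
Qed.

Lemma bias_generic (f : nat -> R) g alpha beta B :
  (0 < n)%N -> (forall i, B i 0%N = 0) -> (forall k, f k != 0 -> (0 < k < n)%N) ->
  \sum_(z : assign n) f (ntreated z) = 1 ->
  bias_formula (fun z => f (ntreated z)) g alpha beta B.
Proof.
move=> n0 B0 fsupp fsum.
set P : design R n := fun z => f (ntreated z).
have Nt_E z : \sum_(i < n) ((z i : nat)%:R : R) = (ntreated z)%:R by rewrite /ntreated natr_sum.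
have Nc_E z : \sum_(i < n) (1 - ((z i : nat)%:R : R)) = n%:R - (ntreated z)%:R.
  by rewrite sumrB sumr_const card_ord Nt_E.
pose T i z : R := (z i : nat)%:R / (ntreated z)%:R.
pose C i z : R := (1 - (z i : nat)%:R) / (n%:R - (ntreated z)%:R).
have nz : (n%:R : R) != 0 by rewrite pnatr_eq0 -lt0n.
have Psupp z : P z != 0 -> (0 < ntreated z < n)%N by apply: fsupp.
have Exp1 : Exp P (fun _ => 1) = 1 by rewrite /Exp; under eq_bigr do rewrite mulr1.
have XT i : Exp P (T i) = n%:R^-1.
  have sym j : Exp P (T i) = Exp P (T j).
    exact: (sym_sum f (fun b k => (b : nat)%:R / (k%:R : R)) i j).
  have : \sum_(j < n) Exp P (T j) = 1.
    rewrite -Exp_sum -Exp1; apply: Exp_ext => z /Psupp /andP [h1 _].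
    rewrite /T -mulr_suml Nt_E divff // pnatr_eq0 -lt0n //.
  under eq_bigr do rewrite -sym.
  rewrite sumr_const card_ord => H.
  by rewrite -(mulKf nz (Exp P (T i))) mulr_natl H mulr1.
have XC i : Exp P (C i) = n%:R^-1.
  have sym j : Exp P (C i) = Exp P (C j).
    exact: (sym_sum f (fun b k => (1 - (b : nat)%:R) / (n%:R - (k%:R : R))) i j).
  have : \sum_(j < n) Exp P (C j) = 1.
    rewrite -Exp_sum -Exp1; apply: Exp_ext => z /Psupp /andP [_ h2].
    rewrite /C -mulr_suml Nc_E divff // subr_eq0 eqr_nat neq_ltn h2 orbT //.
  under eq_bigr do rewrite -sym.
  rewrite sumr_const card_ord => H.
  by rewrite -(mulKf nz (Exp P (C i))) mulr_natl H mulr1.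
rewrite /bias_formula.
have hL : Exp P (beta_naive g alpha beta B) = \sum_(i < n)
   ((alpha i + beta i) * n%:R^-1 + Exp P (fun z => B i (exposure g z i) * T i z)
    - (alpha i * n%:R^-1 + Exp P (fun z => B i (exposure g z i) * C i z))).
  transitivity (\sum_(i<n) Exp P (fun z => ((alpha i + beta i) * T i z
     + B i (exposure g z i) * T i z) - (alpha i * C i z + B i (exposure g z i) * C i z))); last first.
    by apply: eq_bigr => i _; rewrite ExpB !ExpD !ExpZ XT XC.
  rewrite -Exp_sum; apply: Exp_ext => z _.
  rewrite /beta_naive Nt_E Nc_E !mulr_suml -sumrB; apply: eq_bigr => i _.
  rewrite /Yobs /Ypot /T /C; case: (z i) => /=.
    rewrite subrr !mul0r !mulr0 !addr0 mulr1; ring.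
  rewrite subr0 !mul0r !mulr0 !addr0 mulr1; ring.
have hR i : \sum_(1 <= e < (degree g i).+1) B i e * (alpha_ze P g i true e - alpha_ze P g i false e)
   = Exp P (fun z => B i (exposure g z i) * T i z) - Exp P (fun z => B i (exposure g z i) * C i z).
  rewrite -ExpB /alpha_ze.
  under eq_bigr do rewrite -ExpB -ExpZ.
  rewrite -Exp_sum; apply: Exp_ext => z _.
  have e1 : \sum_(j<n) ((z j == true)%:R : R) = (ntreated z)%:R.
    by rewrite -Nt_E; apply: eq_bigr => j _; rewrite eqb_id.
  have e2 : \sum_(j<n) ((z j == false)%:R : R) = n%:R - (ntreated z)%:R.
    by rewrite -Nc_E; apply: eq_bigr => j _; case: (z j); rewrite /= ?subrr ?subr0.
  rewrite e1 e2.
  transitivity (\sum_(1 <= e < (degree g i).+1) B i e * (exposure g z i == e)%:R * (T i z - C i z)).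
    apply: eq_bigr => e _; rewrite /T /C; case: (z i) => /=; ring.
  by rewrite -mulr_suml sum_e // ?B0 ?exposure_le // mulrBr.
rewrite hL; under [in RHS]eq_bigr do rewrite hR.
rewrite /DTE /Ypot.
rewrite mulr_sumr -sumrB; apply: eq_bigr => i _; rewrite B0 /=; ring.
Qed.

Lemma peel (H : nat -> R) m :
  \sum_(k < m.+3) H k = H 0%N + \sum_(k < m.+1) H k.+1 + H m.+2.
Proof. by rewrite big_ord_recl big_ord_recr /= addrA. Qed.

End S.

Theorem corollary1 (R : realFieldType) (n : nat) (g : rel 'I_n)
  (alpha beta : 'I_n -> R) (B : 'I_n -> nat -> R) :
  (2 <= n)%N -> simple_graph g -> (forall i, B i 0%N = 0) ->
  (forall nt : nat, (1 <= nt <= n - 1)%N -> bias_formula (@crd R n nt) g alpha beta B) /\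
  (forall p : R, 0 < p < 1 -> bias_formula (@rbd R n p) g alpha beta B).
Proof.
move=> n2 _ B0; have n0 : (0 < n)%N by apply: leq_trans n2.
split.
  move=> nt /andP [nt1 nt2].
  have ntn : (nt <= n)%N by apply: leq_trans nt2 (leq_subr 1 n).
  apply: (bias_generic (f := fun k => if k == nt then ('C(n, nt)%:R : R)^-1 else 0)) => //.
    move=> k /=; case: ifP => [/eqP -> _|_]; last by rewrite eqxx.
    apply/andP; split => //; case: n n2 nt2 {n0 ntn g alpha beta B B0} => // n' _ h.
    by rewrite subn1 /= in h; rewrite ltnS.
  rewrite (@sum_ntreated R _ (fun k => if k == nt then ('C(n, nt)%:R : R)^-1 else 0)).
  transitivity (\sum_(k < n.+1) (('C(n, nt)%:R : R)^-1 *+ 'C(n, k)) * (nt == k)%:R).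
    apply: eq_bigr => k _; rewrite eq_sym; case: eqP => [->|_]; first by rewrite mulr1.
    by rewrite mul0rn mulr0.
  rewrite (@sum_pick R (fun k => ('C(n, nt)%:R : R)^-1 *+ 'C(n, k))) // -(mulr_natr (('C(n,nt)%:R : R)^-1)) mulVf // pnatr_eq0 -lt0n bin_gt0 //.
move=> p /andP [p0 p1].
case: n n2 g alpha beta B B0 n0 => [|[|m]] // _ g alpha beta B B0 n0.
set D := 1 - p ^+ m.+2 - (1 - p) ^+ m.+2.
have hD : 0 < D.
  have h1 : p ^+ m.+2 < p.
    rewrite exprS; have : p ^+ m.+1 < 1 by rewrite exprn_ilt1 // ltW.
    move=> h; nra.
  have h2 : (1 - p) ^+ m.+2 < 1 - p.
    rewrite exprS; have : (1 - p) ^+ m.+1 < 1 by rewrite exprn_ilt1 // ?subr_ge0 ?ltW // ltrBlDr ltrDl.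
    move=> h; nra.
  rewrite /D; lra.
apply: (bias_generic (f := fun k => if (0 < k)%N && (k < m.+2)%N then
             p ^+ k * (1 - p) ^+ (m.+2 - k) / D else 0)) => //.
  by move=> k; case: ifP => // _; rewrite eqxx.
rewrite (@sum_ntreated R _ (fun k => if (0 < k)%N && (k < m.+2)%N then p ^+ k * (1 - p) ^+ (m.+2 - k) / D else 0)).
rewrite (@peel R (fun k => (if (0 < k)%N && (k < m.+2)%N then p ^+ k * (1 - p) ^+ (m.+2 - k) / D else 0) *+ 'C(m.+2, k))) /= ltnn /= !mul0rn add0r addr0.
have binom : 1 = \sum_(k < m.+3) (p ^+ k * (1 - p) ^+ (m.+2 - k)) *+ 'C(m.+2, k).
  rewrite -[LHS](expr1n _ m.+2) -{1}(subrK p 1) exprDn; apply: eq_bigr => k _.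
  by rewrite mulrC.
rewrite (@peel R (fun k => (p ^+ k * (1 - p) ^+ (m.+2 - k)) *+ 'C(m.+2, k))) /= subn0 expr0 mul1r subnn expr0 mulr1 bin0 binn mulr1n mulr1n in binom.
have hS : \sum_(k < m.+1) (p ^+ k.+1 * (1 - p) ^+ (m.+2 - k.+1)) *+ 'C(m.+2, k.+1) = D.
  rewrite /D; lra.
transitivity ((\sum_(k < m.+1) (p ^+ k.+1 * (1 - p) ^+ (m.+2 - k.+1)) *+ 'C(m.+2, k.+1)) / D).
  rewrite mulr_suml; apply: eq_bigr => k _; rewrite ltnS ltn_ord.
  by rewrite -mulrnAl.
by rewrite hS divff // gt_eqF.
Qed.
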